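(* Let $G$ be a compact group with identity $e$, let $A \subset G$ with $A = A^{-1}$ and $e \in A$, and let $\pi_0 = 1, \pi_1, \dots, \pi_m$ be pairwise distinct (non-isomorphic) irreducible unitary representations of $G$, realized as matrix-valued maps $\pi_i : G \to U(\dim \pi_i)$, with $\pi_0$ the trivial representation. Define \[ B_{\{1,\pi_1,\dots,\pi_m\}}(G,A) = \inf\Big\{ 1 + \sum_{i=1}^m \mathrm{tr}(\bm X_i) \;:\; \bm X_i \in \mathcal{S}^+_{\dim(\pi_i)} \text{ for } i \in [m],\; 1 + \sum_{i=1}^m \mathrm{tr}(\pi_i(g)\bm X_i^\top) \leq 0 \text{ for all } g \in A^c \Big\}, \] where $\mathcal{S}^+_\ell$ is the cone of $\ell \times \ell$ complex positive semidefinite matrices. If $\mu$ is a probability measure on $G$ with $\mathrm{supp}(\mu) \subseteq \overline{A^c}$ and $c > 0$ is such that $\widehat{\mu}(\pi_i) = \int \pi_i(g)\, d\mu(g) \succeq -c \bm I$ for all $i \in [m]$, then \[ B_{\{1,\pi_1,\dots,\pi_m\}}(G,A) \geq 1 + \frac{1}{c}. \]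
   Context: $A^c$ denotes the complement of $A$ in $G$ and $\overline{A^c}$ its closure; $\succeq$ is the positive semidefinite order; $[m] = \{1,\dots,m\}$. *)

(* Defs.v *)
From HB Require Import structures.
From mathcomp Require Import all_boot all_order all_algebra.
From mathcomp Require Import all_classical all_reals all_analysis.
From mathcomp.real_closed Require Import complex.
Set Implicit Arguments. Unset Strict Implicit. Unset Printing Implicit Defensive.
Import Order.TTheory GRing.Theory Num.Theory numFieldNormedType.Exports.
Local Open Scope ring_scope.
Local Open Scope classical_set_scope.

Definition compact_group (T : ptopologicalType) (mul : T -> T -> T)
    (inv : T -> T) (e : T) : Prop :=
  [/\ (forall x y z, mul x (mul y z) = mul (mul x y) z),
      (forall x, mul e x = x /\ mul x e = x) &
      (forall x, mul (inv x) x = e /\ mul x (inv x) = e)] /\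
  [/\ continuous (fun p : T * T => mul p.1 p.2),
      continuous inv,
      hausdorff_space T &
      compact [set: T]].

Definition borel_of (T : ptopologicalType) := g_sigma_algebraType (@open T).

Definition msupport (R : realType) (T : ptopologicalType)
    (mu : set (borel_of T) -> \bar R) : set T :=
  [set x : T | forall U : set T, open U -> U x -> (0 < mu U)%E].

Definition adjmx (R : rcfType) (n p : nat) (M : 'M[R[i]]_(n, p)) : 'M[R[i]]_(p, n) :=
  (map_mx (@conjc R) M)^T.

Definition psd (R : rcfType) (n : nat) (M : 'M[R[i]]_n) : Prop :=
  adjmx M = M /\ forall v : 'rV[R[i]]_n, 0 <= (v *m M *m adjmx v) 0 0.

Definition unitary_rep (R : realType) (T : ptopologicalType) (mul : T -> T -> T)
    (n : nat) (p : T -> 'M[R[i]]_n) : Prop :=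
  [/\ (forall g h, p (mul g h) = p g *m p h),
      (forall g, p g *m adjmx (p g) = 1%:M) &
      (forall j k, continuous (fun g : T => (complex.Re (p g j k) : R)) /\
                   continuous (fun g : T => (complex.Im (p g j k) : R)))].

Definition irreducible_rep (R : realType) (T : ptopologicalType) (n : nat)
    (p : T -> 'M[R[i]]_n) : Prop :=
  (0 < n)%N /\
  forall U : 'M[R[i]]_n, (forall g, (U *m p g <= U)%MS) -> (U == (0 : 'M[R[i]]_n))%MS || (U == (1%:M : 'M[R[i]]_n))%MS.

Definition rep_iso (R : realType) (T : ptopologicalType) (n1 n2 : nat)
    (p1 : T -> 'M[R[i]]_n1) (p2 : T -> 'M[R[i]]_n2) : Prop :=
  exists P : 'M[R[i]]_(n1, n2),
    [/\ row_free P, row_full P & forall g, p1 g *m P = P *m p2 g].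

Definition cintegral (R : realType) (T : ptopologicalType)
    (mu : {measure set (borel_of T) -> \bar R}) (f : T -> R[i]) : R[i] :=
  (Rintegral mu setT (fun g : borel_of T => complex.Re (f g)) +i*
   Rintegral mu setT (fun g : borel_of T => complex.Im (f g)))%C.

Definition fourier (R : realType) (T : ptopologicalType)
    (mu : {measure set (borel_of T) -> \bar R}) (n : nat) (p : T -> 'M[R[i]]_n)
    : 'M[R[i]]_n :=
  \matrix_(j, k) cintegral mu (fun g => p g j k).

Definition B_feasible (R : realType) (T : ptopologicalType) (m : nat)
    (d : 'I_m.+1 -> nat) (pi : forall i : 'I_m.+1, T -> 'M[R[i]]_(d i))
    (A : set T) : set R :=
  [set r : R | exists X : forall i : 'I_m.+1, 'M[R[i]]_(d i),
     [/\ (forall i : 'I_m.+1, i != ord0 -> psd (X i)),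
         (forall g, ~ A g ->
            1 + \sum_(i < m.+1 | i != ord0) \tr (pi i g *m (X i)^T) <= 0) &
         1 + \sum_(i < m.+1 | i != ord0) \tr (X i) = (r%:C)%C]].

Definition Bbound (R : realType) (T : ptopologicalType) (m : nat)
    (d : 'I_m.+1 -> nat) (pi : forall i : 'I_m.+1, T -> 'M[R[i]]_(d i))
    (A : set T) : \bar R :=
  ereal_inf [set r%:E | r in B_feasible pi A].

(* Main.v *)
Require Import Defs.
From HB Require Import structures.
From mathcomp Require Import all_boot all_order all_algebra.
From mathcomp Require Import all_classical all_reals all_analysis.
From mathcomp Require Import measurable_realfun.
From mathcomp.real_closed Require Import complex.
From mathcomp Require Import lra.
Import Order.TTheory GRing.Theory Num.Theory numFieldNormedType.Exports.
Local Open Scope ring_scope.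
Local Open Scope classical_set_scope.
Set Implicit Arguments. Unset Strict Implicit.

Lemma conjCE (R : rcfType) (x : R[i]) : Num.conj_op x = conjc x.
Proof.
rewrite {1}[x]Crect rmorphD rmorphM /= conjCi !conj_Creal ?Creal_Re ?Creal_Im //.
rewrite -complexRe -complexIm -complexiE.
by case: x => a b /=; apply/eqP; rewrite eq_complex /=; simpc.
Qed.

Lemma adjmxE (R : rcfType) m n (M : 'M[R[i]]_(m, n)) :
  adjmx M = (M ^t* )%sesqui.
Proof.
by apply/matrixP => i j; rewrite !mxE conjCE.
Qed.

Lemma psd_diag (R : rcfType) n (N : 'M[R[i]]_n) (P : 'M[R[i]]_n) k :
  psd N -> 0 <= (P *m N *m (P ^t* )%sesqui) k k.
Proof.
move=> [_ HN]; have := HN (row k P).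
suff -> : (row k P *m N *m adjmx (row k P)) 0 0 = (P *m N *m (P ^t* )%sesqui) k k by [].
rewrite !mxE; apply: eq_bigr => l _; rewrite !mxE conjCE; congr (_ * _).
by apply: eq_bigr => j _; rewrite !mxE.
Qed.

Lemma psd_tr_ge0 (R : rcfType) n (M Q : 'M[R[i]]_n) :
  psd M -> psd Q -> 0 <= \tr (M *m Q).
Proof.
move=> HM HQ.
have Qh : (Q ^t* )%sesqui = Q by rewrite -adjmxE; case: HQ.
have Qn : Q \is normalmx by apply/eqP; rewrite Qh.
have /orthomx_spectralP QE := Qn.
set P := spectralmx Q in QE; set D := spectral_diag Q in QE.
have Pu : P \is unitarymx by exact: spectral_unitarymx.
have PPt : P *m (P ^t* )%sesqui = 1%:M by apply/unitarymxP.
rewrite invmx_unitary // in QE.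
have Dk : forall k, 0 <= D 0 k.
  move=> k; have := @psd_diag _ _ Q P k HQ.
  by rewrite {1}QE !mulmxA PPt mul1mx -mulmxA PPt mulmx1 mxE eqxx mulr1n.
rewrite QE !mulmxA mxtrace_mulC !mulmxA /mxtrace.
apply: sumr_ge0 => k _.
rewrite mul_mx_diag mxE.
apply: mulr_ge0 => //; exact: (@psd_diag _ _ M P k HM).
Qed.

Lemma psd_trmx (R : rcfType) n (Y : 'M[R[i]]_n) : psd Y -> psd Y^T.
Proof.
move=> [Yh HY]; split.
  by rewrite /adjmx map_trmx trmxK -[in RHS]Yh /adjmx trmxK.
move=> v; have := HY (map_mx (@conjc R) v).
suff -> : (v *m Y^T *m adjmx v) 0 0 = (map_mx (@conjc R) v *m Y *m adjmx (map_mx (@conjc R) v)) 0 0 by [].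
set M0 := v *m Y^T *m adjmx v; have -> : M0 0 0 = (M0^T) 0 0 by rewrite [M0^T 0 0]mxE.
rewrite /M0.
rewrite !trmx_mul trmxK mulmxA; congr ((_ *m _ *m _) 0 0).
- by rewrite /adjmx trmxK.
- by apply/matrixP => a b; rewrite !mxE conjcK.
Qed.

Lemma ReD (R : rcfType) (a b : R[i]) : complex.Re (a + b) = complex.Re a + complex.Re b.
Proof. by case: a => ? ?; case: b. Qed.

Lemma ReM (R : rcfType) (a b : R[i]) : complex.Re (a * b) = complex.Re a * complex.Re b - complex.Im a * complex.Im b.
Proof. by case: a => ? ?; case: b. Qed.

Lemma Re_sum (R : rcfType) (I : Type) (s : seq I) (P : pred I) (F : I -> R[i]) :
  complex.Re (\sum_(i <- s | P i) F i) = \sum_(i <- s | P i) complex.Re (F i).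
Proof. exact: (big_morph (@complex.Re R) (@ReD R) (erefl : complex.Re (0 : R[i]) = 0)). Qed.

Lemma Re_tr (R : rcfType) n (P Y : 'M[R[i]]_n) :
  complex.Re (\tr (P *m Y^T)) =
  \sum_j \sum_k (complex.Re (P j k) * complex.Re (Y j k) - complex.Im (P j k) * complex.Im (Y j k)).
Proof.
rewrite /mxtrace Re_sum; apply: eq_bigr => j _; rewrite mxE Re_sum.
by apply: eq_bigr => k _; rewrite mxE ReM.
Qed.
Section Good.
Context (R : realType) (T : ptopologicalType) (mu : probability (borel_of T) R).
Hypothesis Tc : compact [set: T].

Lemma cont_meas (f : T -> R) : continuous f ->
  measurable_fun (setT : set (borel_of T)) f.
Proof.
move=> /continuousP cf; apply: (measurability _ (RGenOpens.measurableE R)).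
move=> _ [_ [a [b ->]] <-]; rewrite setTI.
apply: sub_sigma_algebra; apply: cf; exact: interval_open.
Qed.

Definition good (f : T -> R) :=
  continuous f /\ mu.-integrable (setT : set (borel_of T)) (EFin \o f).

Lemma good_cont (f : T -> R) : continuous f -> good f.
Proof.
move=> cf; split => //; apply: measurable_bounded_integrable => //.
- by move: (probability_setT mu) => /= P1; rewrite (_ : mu _ = 1%E) // ltry.
- exact: cont_meas.
have B : bounded_set (f @` setT).
  apply: compact_bounded; apply: continuous_compact => //.
  exact: continuous_subspaceT.
case: B => M [Mr HM]; exists M; split => // y My x _; apply: (HM y My); exists x => //.
Qed.

Lemma good_cst r : good (fun=> r).
Proof. apply: good_cont; exact: cst_continuous. Qed.

Lemma goodD f g : good f -> good g -> good (fun x => f x + g x).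
Proof.
move=> [cf _] [cg _]; apply: good_cont => x; exact: (continuousD (cf x) (cg x)).
Qed.

Lemma goodM f g : good f -> good g -> good (fun x => f x * g x).
Proof.
move=> [cf _] [cg _]; apply: good_cont => x; exact: (continuousM (cf x) (cg x)).
Qed.

Lemma goodB f g : good f -> good g -> good (fun x => f x - g x).
Proof.
move=> [cf _] [cg _]; apply: good_cont => x; exact: (continuousB (cf x) (cg x)).
Qed.

Lemma RintD f g : good f -> good g ->
  Rintegral mu setT (fun x => f x + g x) = Rintegral mu setT f + Rintegral mu setT g.
Proof. by move=> [_ If] [_ Ig]; rewrite RintegralD. Qed.

Lemma RintB f g : good f -> good g ->
  Rintegral mu setT (fun x => f x - g x) = Rintegral mu setT f - Rintegral mu setT g.
Proof. by move=> [_ If] [_ Ig]; rewrite RintegralB. Qed.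

Lemma RintMr f r : good f ->
  Rintegral mu setT (fun x => f x * r) = Rintegral mu setT f * r.
Proof. by move=> [_ If]; rewrite RintegralZr. Qed.

Lemma Rint_cst r : Rintegral mu setT (fun=> r) = r.
Proof.
rewrite Rintegral_cst //; transitivity (r * fine (1%E : \bar R)); last by rewrite mulr1.
congr (r * fine _); exact: (probability_setT mu).
Qed.

Lemma good_sum (I : Type) (s : seq I) (P : pred I) (F : I -> T -> R) :
  (forall i, P i -> good (F i)) ->
  good (fun x => \sum_(i <- s | P i) F i x) /\
  Rintegral mu setT (fun x => \sum_(i <- s | P i) F i x) =
    \sum_(i <- s | P i) Rintegral mu setT (F i).
Proof.
move=> HF; elim: s => [|a s [IHg IHi]].
  under eq_fun do rewrite big_nil.
  by rewrite big_nil; split; [exact: good_cst|exact: Rint_cst].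
under eq_fun do rewrite big_cons.
rewrite big_cons; case: (boolP (P a)) => Pa.
  by split; [exact: (goodD (HF a Pa) IHg)|rewrite (RintD (HF a Pa) IHg) IHi].
by split.
Qed.


Lemma neg_seq (s : seq T) (V : T -> set T) :
  (forall x, x \in s -> mu.-negligible (V x : set (borel_of T))) ->
  mu.-negligible (\bigcup_(x in [set y | y \in s]) V x : set (borel_of T)).
Proof.
elim: s => [|a s IH] H.
  apply: (negligibleS _ (negligible_set0 mu)) => y [x]; by rewrite /= in_nil.
apply: (negligibleS _ (negligibleU (H a _) (IH _))).
- move=> y [x]; rewrite /= inE => /orP[/eqP->|xs] Vy; [by left|right; by exists x].
- by rewrite inE eqxx.
- by move=> x xs; apply: H; rewrite inE xs orbT.
Qed.

Lemma int_le0 (h : T -> R) (B : set T) :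
  continuous h -> msupport mu `<=` closure B -> (forall x, B x -> h x <= 0) ->
  Rintegral mu setT h <= 0.
Proof.
move=> hc sB hB.
have hP := (continuousP h).1 hc.
pose N := h @^-1` [set y | 0 < y].
have oN : open N by apply: hP; exact: open_gt.
have mN : measurable (N : set (borel_of T)) by apply: sub_sigma_algebra.
have clB : closure B `<=` ~` N.
  have cN : closed (~` N) := open_closedC oN.
  have BN : B `<=` ~` N by move=> x /hB hx; rewrite /N /=; apply/negP; rewrite -leNgt.
  by move=> x /(closureS BN); rewrite -((closure_id _).1 cN).
have Nsupp : forall x, N x -> exists V : set T, [/\ open V, V x & mu V = 0%E].
  move=> x Nx; have : ~ msupport mu x by move=> /sB /clB.
  move=> /existsNP [V /not_implyP [oV /not_implyP [Vx /negP]]].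
  rewrite lt0e negb_and measure_ge0 orbF negbK => /eqP V0.
  by exists V.
pose K := fun n : nat => [set x : T | n.+1%:R^-1 <= h x].
have KN : forall n, mu.-negligible (K n : set (borel_of T)).
  move=> n.
  have cK : closed (K n).
    have -> : K n = ~` (h @^-1` [set y | y < n.+1%:R^-1]).
      by apply/seteqP; split => x; rewrite /K /= => H; [apply/negP; rewrite -leNgt | rewrite leNgt; apply/negP].
    apply: open_closedC; apply: hP; exact: open_lt.
  have Kc : compact (K n) := subclosed_compact cK Tc (@subsetT _ _).
  have [V HV] : {V : T -> set T & forall x, K n x -> [/\ open (V x), V x x & mu (V x) = 0%E]}.
    apply: (choice (P := fun x (V : set T) => K n x -> [/\ open V, V x & mu V = 0%E])) => x.
    case: (pselect (K n x)) => Kx; last by exists set0.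
    have Nx : N x by rewrite /N /=; apply: lt_le_trans Kx; rewrite invr_gt0.
    by have [W HW] := Nsupp x Nx; exists W.
  move: Kc; rewrite compact_cover => /(_ T (K n) V) [].
  - by move=> x /HV [].
  - by move=> x Kx; exists x => //; have [] := HV x Kx.
  move=> D' D'K Kcov.
  apply: (@negligibleS _ (borel_of T) _ mu _ _ Kcov).
  apply: neg_seq => x xD.
  have /HV [oV _ V0] : K n x by have := D'K x xD; rewrite inE.
  by apply/negligibleP => //; apply: sub_sigma_algebra.
have NN : mu.-negligible (N : set (borel_of T)).
  apply: (negligibleS _ (negligible_bigcup KN)).
  move=> x Nx; exists (Num.truncn (h x)^-1) => //; rewrite /K /=.
  have := Num.Theory.truncnS_gt (h x)^-1; set k := _.+1%:R => Hk.
  have k0 : 0 < k by rewrite /k ltr0Sn.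
  by rewrite -[h x]invrK lef_pV2 ?posrE ?invr_gt0 // ltW.
have muN : mu N = 0%E by apply: measure_negligible.
have [_ Ih] := good_cont hc.
have -> : Rintegral mu setT h = Rintegral mu (setT `\` N) h.
  by rewrite /Rintegral (negligible_integral mN _ Ih muN).
have mD : measurable (setT `\` N : set (borel_of T)) := measurableD measurableT mN.
apply: (le_trans (le_Rintegral (f2 := fun=> 0) mD _ _ _)).
- exact: integrableS Ih.
- exact: integrableS (good_cst 0).2.
- by move=> x [_ Nx]; rewrite leNgt; apply/negP.
by rewrite Rintegral_cst // mul0r.
Qed.

End Good.

Unset Implicit Arguments.

Theorem lemma2p5 (R : realType) (T : ptopologicalType)
    (mul : T -> T -> T) (inv : T -> T) (e : T)
    (A : set T) (m : nat) (d : 'I_m.+1 -> nat)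
    (pi : forall i : 'I_m.+1, T -> 'M[R[i]]_(d i))
    (mu : probability (borel_of T) R) (c : R) :
  compact_group mul inv e ->
  (forall g, A (inv g) <-> A g) ->
  A e ->
  (forall i, unitary_rep mul (pi i)) ->
  (forall i, irreducible_rep (pi i)) ->
  (forall i j : 'I_m.+1, i != j -> ~ rep_iso (pi i) (pi j)) ->
  d ord0 = 1%N ->
  (forall g, pi ord0 g = 1%:M) ->
  msupport mu `<=` closure (~` A) ->
  0 < c ->
  (forall i : 'I_m.+1, i != ord0 -> psd (fourier mu (pi i) + ((c%:C)%C)%:M)) ->
  ((1 + c^-1)%:E <= Bbound pi A)%E.
Proof.
move=> [_ [_ _ _ Tc]] _ _ Hu _ _ _ _ Hsupp c0 Hf.
apply/ereal_infP => _ [r [X [HX Hcons Hr]] <-]; rewrite lee_fin.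
pose trm (i : 'I_m.+1) (j k : 'I_(d i)) (g : T) : R :=
  complex.Re (pi i g j k) * complex.Re (X i j k) - complex.Im (pi i g j k) * complex.Im (X i j k).
pose Fi i g := \sum_j \sum_k trm i j k g.
pose h g := 1 + \sum_(i < m.+1 | i != ord0) Fi i g.
have gtrm : forall i j k, good mu (trm i j k) /\
   Rintegral mu setT (trm i j k) =
   Rintegral mu setT (fun g => complex.Re (pi i g j k)) * complex.Re (X i j k) -
   Rintegral mu setT (fun g => complex.Im (pi i g j k)) * complex.Im (X i j k).
  move=> i j k; have [_ _ /(_ j k) [cRe cIm]] := Hu i.
  have gRe := good_cont mu Tc cRe; have gIm := good_cont mu Tc cIm.
  have g1 := goodM Tc gRe (good_cst mu Tc (complex.Re (X i j k))).
  have g2 := goodM Tc gIm (good_cst mu Tc (complex.Im (X i j k))).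
  split; first by rewrite /trm; exact: (goodB Tc g1 g2).
  by rewrite /trm (RintB g1 g2) (RintMr _ gRe) (RintMr _ gIm).
have gK : forall i j, good mu (fun g => \sum_k trm i j k g) /\
    Rintegral mu setT (fun g => \sum_k trm i j k g) =
    \sum_k Rintegral mu setT (trm i j k).
  by move=> i j; exact: (@good_sum _ _ mu Tc _ (index_enum 'I_(d i)) xpredT (trm i j) (fun k _ => (gtrm i j k).1)).
have gF : forall i, good mu (Fi i) /\
    Rintegral mu setT (Fi i) = \sum_j \sum_k Rintegral mu setT (trm i j k).
  move=> i; have [G E] := @good_sum _ _ mu Tc _ (index_enum 'I_(d i)) xpredT (fun j g => \sum_k trm i j k g) (fun j _ => (gK i j).1).
  split; first exact: G.
  rewrite /Fi; transitivity (\sum_j Rintegral mu setT (fun g => \sum_k trm i j k g)).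
    exact: E.
  by apply: eq_bigr => j _; rewrite (gK i j).2.
pose a i := complex.Re (\tr (fourier mu (pi i) *m (X i)^T)).
have RFi : forall i, Rintegral mu setT (Fi i) = a i.
  move=> i; rewrite (gF i).2 /a Re_tr; apply: eq_bigr => j _; apply: eq_bigr => k _.
  by rewrite (gtrm i j k).2 !mxE.
have [gS ES] := @good_sum _ _ mu Tc _ (index_enum 'I_m.+1) (fun i => i != ord0) Fi (fun i _ => (gF i).1).
have gh : good mu h by exact: (goodD Tc (good_cst mu Tc 1) gS).
have Rh : Rintegral mu setT h = 1 + \sum_(i < m.+1 | i != ord0) a i.
  rewrite /h (RintD (good_cst mu Tc 1) gS) Rint_cst; congr (1 + _).
  transitivity (\sum_(i < m.+1 | i != ord0) Rintegral mu setT (Fi i)); first exact: ES.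
  by apply: eq_bigr => i _; rewrite RFi.
have hB : forall x, (~` A) x -> h x <= 0.
  move=> x Ax; have := Hcons x Ax; rewrite lecE => /andP[_].
  rewrite ReD Re_sum /h /=; congr (_ + _ <= _); apply: eq_bigr => i _.
  by rewrite Re_tr.
have Hint : 1 + \sum_(i < m.+1 | i != ord0) a i <= 0.
  by rewrite -Rh; exact: (int_le0 Tc gh.1 Hsupp hB).
have Hai : forall i, i != ord0 -> 0 <= a i + c * complex.Re (\tr (X i)).
  move=> i Hi; have := psd_tr_ge0 (Hf i Hi) (psd_trmx (HX i Hi)).
  rewrite mulmxDl mxtraceD mul_scalar_mx mxtraceZ mxtrace_tr lecE => /andP[_].
  by rewrite ReD ReM /= mul0r subr0.
have Htr : r = 1 + \sum_(i < m.+1 | i != ord0) complex.Re (\tr (X i)).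
  by have := congr1 (@complex.Re R) Hr; rewrite ReD Re_sum /=.
have Hsum : 0 <= \sum_(i < m.+1 | i != ord0) a i +
    c * \sum_(i < m.+1 | i != ord0) complex.Re (\tr (X i)).
  rewrite mulr_sumr -big_split /=; apply: sumr_ge0 => i Hi; exact: Hai.
rewrite Htr lerD2l.
move: Hint Hsum; set S := \sum_(i < _ | _) a i; set t := \sum_(i < _ | _) _.
set ct := c * t => H1 H2.
have H3 : 1 <= ct by lra.
by rewrite -(ler_pM2l c0) mulfV ?gt_eqF.
Qed.
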